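(* Let $G$ be a group and $L,R$ nonempty subsets of $G$. The two-sided group digraph $2\mathrm{S}(G;L,R)$ is strongly connected if and only if $G=\mathcal{W}(L^{-1})\mathcal{W}(R)=\mathcal{W}(L)\mathcal{W}(R^{-1})$ and there exist integers $i,j\ge 0$ such that $e=w_{L^{-1},i+1}\,w_{R,i}$ and $e=w_{L^{-1},j}\,w_{R,j+1}$ for some words $w_{L^{-1},i+1},w_{R,i},w_{L^{-1},j},w_{R,j+1}$ of the indicated lengths.
   Context: For nonempty subsets $L,R$ of a group $G$, the two-sided group digraph $2\mathrm{S}(G;L,R)$ has vertex set $G$ and a directed arc $(g,h)$ from $g$ to $h$ if and only if $h=l^{-1}gr$ for some $l\in L$, $r\in R$ (loops allowed; there are no multiple arcs). For a nonempty subset $S\subseteq G$, a word in $S$ of length $n$ is a product $s_1s_2\cdots s_n$ with all $s_i\in S$ (not necessarily distinct); $w_{S,n}$ denotes the group element given by some word in $S$ of length $n$, where a word of length $0$ is the identity $e$; different occurrences of $w_{S,n}$ may denote different words. $\mathcal{W}(S)$ is the set of elements of $G$ expressible as words in $S$ of positive finite length, and for subsets $A,B$, $AB=\{ab: a\in A,b\in B\}$. A digraph is strongly connected if for every pair of vertices $g,h$ there is a directed path from $g$ to $h$ and one from $h$ to $g$. *)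

(* Defs.v *)
From Stdlib Require Import Relations.

Record Group := {
  carrier :> Type;
  gmul : carrier -> carrier -> carrier;
  ginv : carrier -> carrier;
  gone : carrier;
  gmulA : forall x y z, gmul x (gmul y z) = gmul (gmul x y) z;
  gmul1l : forall x, gmul gone x = x;
  gmul1r : forall x, gmul x gone = x;
  gmulVl : forall x, gmul (ginv x) x = gone;
  gmulVr : forall x, gmul x (ginv x) = gone
}.

Arguments gmul {g}.
Arguments ginv {g}.
Arguments gone {g}.

Section Defs.
Variable G : Group.

Definition nonempty (S : G -> Prop) : Prop := exists x, S x.

Definition invset (S : G -> Prop) : G -> Prop :=
  fun x => exists s, S s /\ x = ginv s.

Definition setmul (A B : G -> Prop) : G -> Prop :=
  fun g => exists a b, A a /\ B b /\ g = gmul a b.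

Inductive is_word (T : G -> Prop) : nat -> G -> Prop :=
  | word_nil : is_word T 0 gone
  | word_snoc : forall n w s, is_word T n w -> T s -> is_word T (S n) (gmul w s).

Definition Wd (S : G -> Prop) : G -> Prop :=
  fun x => exists n, 1 <= n /\ is_word S n x.

Definition twoS_arc (L R : G -> Prop) (g h : G) : Prop :=
  exists l r, L l /\ R r /\ h = gmul (gmul (ginv l) g) r.

Definition dpath (L R : G -> Prop) : G -> G -> Prop :=
  clos_refl_trans G (twoS_arc L R).

Definition strongly_connected (L R : G -> Prop) : Prop :=
  forall g h : G, dpath L R g h /\ dpath L R h g.

End Defs.

Arguments nonempty {G}.
Arguments invset {G}.
Arguments setmul {G}.
Arguments is_word {G}.
Arguments Wd {G}.
Arguments twoS_arc {G}.
Arguments dpath {G}.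
Arguments strongly_connected {G}.

(* Main.v *)
Require Import Defs.
From Stdlib Require Import Relations Lia PeanoNat.

Ltac gs := repeat (rewrite ?gmul1l, ?gmul1r, ?gmulA).

Lemma ginv_mul (G : Group) (x y : G) : ginv (gmul x y) = gmul (ginv y) (ginv x).
Proof.
  assert (H : gmul (gmul x y) (gmul (ginv y) (ginv x)) = gone).
  { gs. rewrite <- (gmulA G x y), gmulVr, gmul1r, gmulVr. reflexivity. }
  transitivity (gmul (ginv (gmul x y)) (gmul (gmul x y) (gmul (ginv y) (ginv x)))).
  - rewrite H, gmul1r. reflexivity.
  - rewrite gmulA, gmulVl, gmul1l. reflexivity.
Qed.

Lemma ginv_inv (G : Group) (x : G) : ginv (ginv x) = x.
Proof.
  transitivity (gmul (ginv (ginv x)) (gmul (ginv x) x)).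
  - rewrite gmulVl, gmul1r. reflexivity.
  - rewrite gmulA, gmulVl, gmul1l. reflexivity.
Qed.

Lemma ginv_one (G : Group) : ginv (@gone G) = gone.
Proof. rewrite <- (gmul1l G (ginv gone)). apply gmulVr. Qed.

Lemma word_cat (G : Group) (T : G -> Prop) n y :
  is_word T n y -> forall m x, is_word T m x -> is_word T (m + n) (gmul x y).
Proof.
  induction 1; intros m x Hx.
  - rewrite Nat.add_0_r, gmul1r. exact Hx.
  - rewrite Nat.add_succ_r, gmulA. constructor; auto.
Qed.

Lemma word_one (G : Group) (T : G -> Prop) s : T s -> is_word T 1 s.
Proof. intro Hs. rewrite <- (gmul1l G s). constructor. constructor. exact Hs. Qed.

Lemma word_cons (G : Group) (T : G -> Prop) n w s :
  T s -> is_word T n w -> is_word T (S n) (gmul s w).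
Proof. intros Hs Hw. apply (word_cat G T n w Hw 1 s). apply word_one; auto. Qed.

Lemma word_mono (G : Group) (T T' : G -> Prop) n w :
  (forall x, T x -> T' x) -> is_word T n w -> is_word T' n w.
Proof. intros HT; induction 1; constructor; auto. Qed.

Lemma word_inv (G : Group) (T : G -> Prop) n w :
  is_word T n w -> is_word (invset T) n (ginv w).
Proof.
  induction 1.
  - rewrite ginv_one. constructor.
  - rewrite ginv_mul. apply word_cons; auto. exists s; auto.
Qed.

Lemma invinv (G : Group) (T : G -> Prop) x : invset (invset T) x -> T x.
Proof.
  intros [s [[l [Hl ->]] ->]]. rewrite ginv_inv. exact Hl.
Qed.

Lemma word_uncons (G : Group) (T : G -> Prop) n w :
  is_word T (S n) w -> exists s w', T s /\ is_word T n w' /\ w = gmul s w'.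
Proof.
  revert w; induction n; intros w H.
  - inversion H; subst. inversion H1; subst. exists s, gone.
    split; auto. split. constructor. rewrite gmul1l, gmul1r; auto.
  - inversion H; subst. destruct (IHn _ H1) as [s' [w' [Hs [Hw ->]]]].
    exists s', (gmul w' s). split; auto. split. constructor; auto.
    rewrite gmulA; auto.
Qed.

Lemma words_path (G : Group) (L R : G -> Prop) n :
  forall A B g, is_word (invset L) n A -> is_word R n B ->
  dpath L R g (gmul (gmul A g) B).
Proof.
  induction n; intros A B g HA HB.
  - inversion HA; inversion HB; subst. rewrite gmul1l, gmul1r. apply rt_refl.
  - inversion HA as [|n0 w s Hw Hs]; subst. destruct (word_uncons G R n B HB) as [r [B' [Hr [HB' ->]]]].
    destruct Hs as [l [Hl ->]].
    apply rt_trans with (gmul (gmul (ginv l) g) r).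
    + apply rt_step. exists l, r; auto.
    + specialize (IHn w B' (gmul (gmul (ginv l) g) r) Hw HB').
      replace (gmul (gmul (gmul w (ginv l)) g) (gmul r B'))
        with (gmul (gmul w (gmul (gmul (ginv l) g) r)) B') by (gs; reflexivity).
      exact IHn.
Qed.

Lemma path_words (G : Group) (L R : G -> Prop) g h :
  dpath L R g h -> exists n A B, is_word (invset L) n A /\ is_word R n B /\
    h = gmul (gmul A g) B.
Proof.
  induction 1.
  - destruct H as [l [r [Hl [Hr ->]]]]. exists 1, (ginv l), r.
    split. apply word_one. exists l; auto. split. apply word_one; auto. reflexivity.
  - exists 0, gone, gone. split. constructor. split. constructor. gs. reflexivity.
  - destruct IHclos_refl_trans1 as [n [A [B [HA [HB ->]]]]].
    destruct IHclos_refl_trans2 as [n' [A' [B' [HA' [HB' ->]]]]].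
    exists (n + n'), (gmul A' A), (gmul B B'). split.
    + rewrite Nat.add_comm. apply (word_cat G _ n A HA n' A' HA').
    + split. apply (word_cat G _ n' B' HB' n B HB). gs. reflexivity.
Qed.

Lemma balance (P : nat -> nat -> Prop) i j :
  (forall p q, P p q -> P (p + S i) (q + i)) ->
  (forall p q, P p q -> P (p + j) (q + S j)) ->
  forall p q, P p q -> exists n, P n n.
Proof.
  intros H1 H2.
  assert (K : forall d p q, (p + d = q \/ q + d = p) -> P p q -> exists n, P n n).
  { induction d; intros p q Hd HP.
    - exists p. assert (q = p) as -> by lia. exact HP.
    - destruct Hd as [Hd | Hd].
      + apply (IHd (p + S i) (q + i)). lia. auto.
      + apply (IHd (p + j) (q + S j)). lia. auto. }
  intros p q HP. destruct (Nat.le_gt_cases p q).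
  - apply (K (q - p) p q). lia. exact HP.
  - apply (K (p - q) p q). lia. exact HP.
Qed.

Lemma solve_mid (G : Group) (A g B : G) :
  gmul (gmul A g) B = gone -> g = gmul (ginv A) (ginv B).
Proof.
  intro E. transitivity (gmul (gmul (ginv A) (gmul (gmul A g) B)) (ginv B)).
  - gs. rewrite gmulVl, gmul1l, <- (gmulA G g B), gmulVr, gmul1r. reflexivity.
  - rewrite E, gmul1r. reflexivity.
Qed.

Theorem mainTheorem1 (G : Group) (L R : G -> Prop)
    (hL : nonempty L) (hR : nonempty R) :
  strongly_connected L R <->
  ((forall g : G, setmul (Wd (invset L)) (Wd R) g) /\
   (forall g : G, setmul (Wd L) (Wd (invset R)) g) /\
   (exists i : nat, exists a b : G,
      is_word (invset L) (S i) a /\ is_word R i b /\ gmul a b = gone) /\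
   (exists j : nat, exists a b : G,
      is_word (invset L) j a /\ is_word R (S j) b /\ gmul a b = gone)).
Proof.
  destruct hL as [l Hl]. destruct hR as [r Hr].
  assert (Hli : invset L (ginv l)) by (exists l; auto).
  split.
  - intro SC. split; [|split; [|split]].
    + intro g. destruct (SC (gmul (gmul (ginv l) gone) r) g) as [P _].
      destruct (path_words G L R _ _ P) as [n [A [B [HA [HB ->]]]]].
      exists (gmul A (ginv l)), (gmul r B). split.
      * exists (S n). split. lia. constructor; auto.
      * split. exists (S n). split. lia. apply word_cons; auto. gs. reflexivity.
    + intro g. destruct (SC (gmul (gmul (ginv l) g) r) gone) as [P _].
      destruct (path_words G L R _ _ P) as [n [A [B [HA [HB HE]]]]].
      exists (ginv (gmul A (ginv l))), (ginv (gmul r B)). split.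
      * exists (S n). split. lia. apply (word_mono G (invset (invset L))).
        apply invinv. apply word_inv. constructor; auto.
      * split. exists (S n). split. lia. apply word_inv. apply word_cons; auto.
        set (A' := gmul A (ginv l)). set (B' := gmul r B).
        assert (HE' : gmul (gmul A' g) B' = gone) by (subst A' B'; rewrite HE; gs; reflexivity).
        apply solve_mid; exact HE'.
    + destruct (SC gone l) as [P _].
      destruct (path_words G L R _ _ P) as [n [A [B [HA [HB HE]]]]].
      exists n, (gmul (ginv l) A), B. split. apply word_cons; auto. split; auto.
      rewrite gmul1r in HE. rewrite <- gmulA, <- HE. apply gmulVl.
    + destruct (SC gone (ginv r)) as [P _].
      destruct (path_words G L R _ _ P) as [n [A [B [HA [HB HE]]]]].
      exists n, A, (gmul B r). split; auto. split. constructor; auto.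
      rewrite gmul1r in HE. rewrite gmulA, <- HE. apply gmulVl.
  - intros [H1 [H2 [[i [x [y [Hx [Hy Hxy]]]]] [j [u [v [Hu [Hv Huv]]]]]]]].
    assert (Hin : forall h, dpath L R gone h).
    { intro h. destruct (H1 h) as [A [B [[p [_ HA]] [[q [_ HB]] ->]]]].
      set (P := fun p q => exists A' B', is_word (invset L) p A' /\ is_word R q B' /\
                            gmul A B = gmul A' B').
      destruct (balance P i j) with p q as [n [A' [B' [HA' [HB' E]]]]].
      - intros p0 q0 [A0 [B0 [HA0 [HB0 E0]]]]. exists (gmul A0 x), (gmul y B0).
        split. apply (word_cat G _ _ x Hx _ A0 HA0). split.
        rewrite Nat.add_comm. apply (word_cat G _ _ B0 HB0 _ y Hy).
        rewrite E0. rewrite <- (gmul1r G A0) at 1. rewrite <- Hxy. gs. reflexivity.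
      - intros p0 q0 [A0 [B0 [HA0 [HB0 E0]]]]. exists (gmul A0 u), (gmul v B0).
        split. apply (word_cat G _ _ u Hu _ A0 HA0). split.
        rewrite Nat.add_comm. apply (word_cat G _ _ B0 HB0 _ v Hv).
        rewrite E0. rewrite <- (gmul1r G A0) at 1. rewrite <- Huv. gs. reflexivity.
      - exists A, B. auto.
      - rewrite E. replace (gmul A' B') with (gmul (gmul A' gone) B') by (rewrite gmul1r; auto).
        apply (words_path G L R n); auto. }
    assert (Hout : forall g, dpath L R g gone).
    { intro g. destruct (H2 g) as [C [D [[p [_ HC]] [[q [_ HD]] ->]]]].
      set (P := fun p q => exists A' B', is_word (invset L) p A' /\ is_word R q B' /\
                            gmul (gmul A' (gmul C D)) B' = gone).
      destruct (balance P i j) with p q as [n [A' [B' [HA' [HB' E]]]]].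
      - intros p0 q0 [A0 [B0 [HA0 [HB0 E0]]]]. exists (gmul x A0), (gmul B0 y).
        split. rewrite Nat.add_comm. apply (word_cat G _ _ A0 HA0 _ x Hx). split.
        apply (word_cat G _ _ y Hy _ B0 HB0).
        transitivity (gmul (gmul x (gmul (gmul A0 (gmul C D)) B0)) y). gs; reflexivity. rewrite E0, gmul1r; exact Hxy.
      - intros p0 q0 [A0 [B0 [HA0 [HB0 E0]]]]. exists (gmul u A0), (gmul B0 v).
        split. rewrite Nat.add_comm. apply (word_cat G _ _ A0 HA0 _ u Hu). split.
        apply (word_cat G _ _ v Hv _ B0 HB0).
        transitivity (gmul (gmul u (gmul (gmul A0 (gmul C D)) B0)) v). gs; reflexivity. rewrite E0, gmul1r; exact Huv.
      - exists (ginv C), (ginv D). split. apply word_inv; auto. split.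
        apply (word_mono G (invset (invset R))). apply invinv. apply word_inv; auto.
        gs. rewrite gmulVl, gmul1l, gmulVr. reflexivity.
      - rewrite <- E. apply (words_path G L R n); auto. }
    intros g h. split; apply rt_trans with gone; first [apply Hout | apply Hin].
Qed.
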